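(* Let $-\infty \le \delta_L < \delta_U \le \infty$, let $\theta_{j,r} \in \mathbb{R}$, let $\mathcal{I}(\theta_{j,r}) \in (0,\infty)$ be the Fisher information at $\theta_{j,r}$, and fix a point $u_{j,r} \in (0,1)$. For $\delta \in [-\infty,\infty]$ put $$a(\delta,\theta_{j,r}) = \frac{\delta-\theta_{j,r}}{\sqrt{\mathcal{I}(\theta_{j,r})^{-1}}},$$ and for real $n>0$ define $$p^{(n)}_{\delta,j,r} = \Phi\!\left(a(\delta,\theta_{j,r})\sqrt{n} - \Phi^{-1}(u_{j,r})\right).$$ Here $\Phi$ is the standard normal CDF, and the conventions $p^{(n)}_{+\infty,j,r}=1$, $p^{(n)}_{-\infty,j,r}=0$ and $a(\pm\infty,\theta_{j,r})^2=+\infty$ are used. Then $$\lim_{n\to\infty}\frac{d}{dn}\,\mathrm{logit}\!\left[p^{(n)}_{\delta_U,j,r}-p^{(n)}_{\delta_L,j,r}\right] = \Big(0.5-\mathbb{I}\{\theta_{j,r}\notin(\delta_L,\delta_U)\}\Big)\times \min\{a(\delta_U,\theta_{j,r})^2,\ a(\delta_L,\theta_{j,r})^2\},$$ where $\mathrm{logit}(x)=\log(x)-\log(1-x)$, $n$ is treated as a continuous variable, and $\mathbb{I}\{\cdot\}$ is the indicator function.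
   Context: Setting: $n$ i.i.d. observations are generated from a parametric model $f(\boldsymbol{w};\boldsymbol{\eta})$ with true parameter $\boldsymbol{\eta}_{j,r}$ drawn from a data-generating distribution $\Psi_j$ for $j\in\{0,1\}$. The scalar estimand is $\theta = g(\boldsymbol{\eta})$, with true value $\theta_{j,r}=g(\boldsymbol{\eta}_{j,r})$. The hypothesis of interest is $H_1:\theta\in(\delta_L,\delta_U)$. The paper assumes that the model satisfies the standard regularity conditions for asymptotic normality of the maximum likelihood estimator, and that the prior satisfies the conditions of the Bernstein–von Mises theorem. The only consequence used in the statement is that the Fisher information $\mathcal{I}(\theta_{j,r})$ is a finite positive number. Interpretation of the quantity $p^{(n)}_{\delta,j,r}$: it is a large-sample proxy for the posterior probability $Pr(\theta<\delta \mid \text{data})$. It is obtained by taking the posterior to be $\mathcal{N}(\hat\theta^{(n)},\mathcal{I}(\theta_{j,r})^{-1}/n)$, where the maximum likelihood estimate is generated by CDF inversion as $\hat\theta^{(n)}=\theta_{j,r}+\Phi^{-1}(u_{j,r})\sqrt{\mathcal{I}(\theta_{j,r})^{-1}/n}$. Consequently, $p^{(n)}_{\delta_U,j,r}-p^{(n)}_{\delta_L,j,r}$ serves as a proxy for $Pr(H_1\mid\text{data})$. *)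

(* Defs.v *)
From Stdlib Require Import Reals ClassicalEpsilon.
From Coquelicot Require Import Coquelicot.
Open Scope R_scope.

Definition std_normal_pdf (t : R) : R := / sqrt (2 * PI) * exp (- t ^ 2 / 2).

Definition Phi (x : R) : R :=
  RInt_gen std_normal_pdf (Rbar_locally m_infty) (at_point x).

Definition Phi_inv (u : R) : R :=
  epsilon (inhabits 0) (fun z => Phi z = u).

Definition logit (x : R) : R := ln x - ln (1 - x).

Definition a_fin (I theta d : R) : R := (d - theta) / sqrt (/ I).

Definition a_sq (I theta : R) (delta : Rbar) : Rbar :=
  match delta with
  | Finite d => Finite (a_fin I theta d ^ 2)
  | _ => p_infty
  end.

Definition p_n (I theta u : R) (delta : Rbar) (n : R) : R :=
  match delta with
  | Finite d => Phi (a_fin I theta d * sqrt n - Phi_inv u)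
  | p_infty => 1
  | m_infty => 0
  end.

Definition ind_not_in (theta : R) (dL dU : Rbar) : R :=
  match excluded_middle_informative (Rbar_lt dL theta /\ Rbar_lt theta dU) with
  | left _ => 0
  | right _ => 1
  end.

(* Main.v *)
Require Import Defs.
From Stdlib Require Import Reals Lra Psatz ClassicalEpsilon.
From Coquelicot Require Import Coquelicot.
Open Scope R_scope.

Ltac Rring := match goal with |- ?a = ?b => change (@eq R a b) end; ring.
Ltac Rfield := match goal with |- ?a = ?b => change (@eq R a b) end; field.

Ltac posit := first [assumption | lra | apply Rplus_lt_0_compat; posit | apply Rmult_lt_0_compat; posit].
Ltac nz := repeat match goal with |- _ /\ _ => split end;
  first [lra | apply Rgt_not_eq; nra | apply Rlt_not_eq; nra | nra
        | apply Rgt_not_eq; unfold Rgt; posit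
        | apply Rgt_not_eq; match goal with |- context [?x ^ 2] => pose proof (pow2_ge_0 x); nra end].
Ltac Fld := Rfield; nz.

Lemma exd_cont (f : R -> R) x : ex_derive f x -> continuous f x.
Proof. intros H; apply (ex_derive_continuous (K:=R_AbsRing) (V:=R_NormedModule)); exact H. Qed.

Lemma exRI_cont (f : R -> R) a b : (forall z, Rmin a b <= z <= Rmax a b -> continuous f z) -> ex_RInt f a b.
Proof. intros H; apply (ex_RInt_continuous (V:=R_CompleteNormedModule)); exact H. Qed.

Lemma RInt_cor (f : R -> R) a b : ex_RInt f a b -> is_RInt f a b (RInt f a b).
Proof. intros H; apply (RInt_correct (V:=R_CompleteNormedModule)); exact H. Qed.

Lemma RInt_scalR (f : R -> R) a b k : ex_RInt f a b -> RInt (fun t => k * f t) a b = k * RInt f a b.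
Proof. intros H. apply (RInt_scal (V:=R_CompleteNormedModule)); exact H. Qed.

Lemma RInt_comp_linR (f : R -> R) u v a b : ex_RInt f (u*a+v) (u*b+v) ->
  RInt (fun y => u * f (u*y+v)) a b = RInt f (u*a+v) (u*b+v).
Proof. intros H. apply (RInt_comp_lin (V:=R_CompleteNormedModule)); exact H. Qed.

Lemma derR_plus (f g : R -> R) x df dg : is_derive f x df -> is_derive g x dg ->
  is_derive (fun y => f y + g y) x (df + dg).
Proof. intros H1 H2. apply (is_derive_plus (K:=R_AbsRing) (V:=R_NormedModule)); assumption. Qed.

Lemma derR_minus (f g : R -> R) x df dg : is_derive f x df -> is_derive g x dg ->
  is_derive (fun y => f y - g y) x (df - dg).
Proof. intros H1 H2. apply (is_derive_minus (K:=R_AbsRing) (V:=R_NormedModule)); assumption. Qed.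

Lemma derR_comp (f g : R -> R) x df dg : is_derive f (g x) df -> is_derive g x dg ->
  is_derive (fun y => f (g y)) x (df * dg).
Proof. intros H1 H2. rewrite Rmult_comm. apply (is_derive_comp (K:=R_AbsRing) (V:=R_NormedModule)); assumption. Qed.

Lemma derR_ext (f g : R -> R) x d : (forall y, f y = g y) -> is_derive f x d -> is_derive g x d.
Proof. intros H1 H2. apply (is_derive_ext (K:=R_AbsRing) (V:=R_NormedModule) f); assumption. Qed.

Lemma derR_eq (f : R -> R) x d d' : d = d' -> is_derive f x d -> is_derive f x d'.
Proof. intros ->; auto. Qed.

Definition gg (t : R) : R := exp (- t ^ 2 / 2).

Lemma gg_cont x : continuous gg x.
Proof. apply exd_cont. unfold gg. auto_derive. auto. Qed.

Lemma gg_pos x : 0 < gg x.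
Proof. unfold gg; apply exp_pos. Qed.

Lemma ex_RInt_gg a b : ex_RInt gg a b.
Proof. apply exRI_cont; intros; apply gg_cont. Qed.

Definition GG (x : R) := RInt gg 0 x.

Lemma GG_derive x : is_derive GG x (gg x).
Proof.
  apply (is_derive_RInt gg GG 0).
  - apply filter_forall; intros y. apply RInt_cor, ex_RInt_gg.
  - apply gg_cont.
Qed.

Definition jf (u t : R) : R := exp (- (u ^ 2 * (1 + t ^ 2)) / 2) / (1 + t ^ 2).
Definition JJ (x : R) := RInt (fun t => jf x t) 0 1.

Lemma jf_derive u t : is_derive (fun z => jf z t) u (- u * exp (- (u ^ 2 * (1 + t ^ 2)) / 2)).
Proof.
  unfold jf. auto_derive.
  - nra.
  - replace (- (u * (u * 1) * (1 + t * (t * 1))) * / 2) with (- (u ^ 2 * (1 + t ^ 2)) / 2) by (unfold Rdiv; ring).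
    field. nra.
Qed.

Lemma cont2d_jd x t : continuity_2d_pt (fun u v => - u * exp (- (u ^ 2 * (1 + v ^ 2)) / 2)) x t.
Proof.
  apply continuity_2d_pt_mult.
  - apply continuity_2d_pt_opp, continuity_2d_pt_id1.
  - apply continuity_1d_2d_pt_comp.
    + apply derivable_continuous_pt, derivable_pt_exp.
    + apply continuity_2d_pt_ext with (fun u v => (- (u * u * (1 + v * v))) * / 2).
      { intros; simpl; field. }
      apply continuity_2d_pt_mult; [|apply continuity_2d_pt_const].
      apply continuity_2d_pt_opp.
      repeat apply continuity_2d_pt_mult; try apply continuity_2d_pt_id1.
      apply continuity_2d_pt_plus; [apply continuity_2d_pt_const|].
      apply continuity_2d_pt_mult; apply continuity_2d_pt_id2.
Qed.

Lemma jf_cont x t : continuous (fun t => jf x t) t.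
Proof. apply exd_cont. unfold jf. auto_derive. nra. Qed.

Lemma JJ_derive x : is_derive JJ x (- gg x * GG x).
Proof.
  assert (H : is_derive JJ x (RInt (fun t => Derive (fun u => jf u t) x) 0 1)).
  { apply (is_derive_RInt_param jf 0 1 x).
    - apply filter_forall; intros y t _. eexists; apply jf_derive.
    - intros t _. eapply continuity_2d_pt_ext; [|apply (cont2d_jd x t)].
      intros u v; simpl. symmetry; apply is_derive_unique, jf_derive.
    - apply filter_forall; intros y. apply exRI_cont; intros; apply jf_cont. }
  replace (- gg x * GG x) with (RInt (fun t => Derive (fun u => jf u t) x) 0 1); auto.
  rewrite (RInt_ext _ (fun t => - gg x * (x * gg (x * t + 0)))).
  2:{ intros t _. erewrite is_derive_unique; [|apply jf_derive].
      unfold gg. replace (- (x ^ 2 * (1 + t ^ 2)) / 2) with (- x ^ 2 / 2 + - (x * t + 0) ^ 2 / 2) by field.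
      rewrite exp_plus. Rring. }
  rewrite RInt_scalR.
  2:{ apply (ex_RInt_comp_lin (V:=R_CompleteNormedModule) gg x 0 0 1). apply ex_RInt_gg. }
  rewrite RInt_comp_linR. 2: apply ex_RInt_gg.
  unfold GG. rewrite Rmult_0_r, Rplus_0_r, Rmult_1_r, Rplus_0_r. reflexivity.
Qed.

Definition hh x := JJ x + GG x ^ 2 / 2.

Lemma hh_derive x : is_derive hh x 0.
Proof.
  unfold hh.
  apply derR_eq with (- gg x * GG x + (GG x) * gg x).
  { Rring. }
  apply derR_plus. apply JJ_derive.
  apply derR_eq with ((2 * GG x / 2) * gg x). { Rfield. }
  apply (derR_comp (fun y => y ^ 2 / 2) GG). 2: apply GG_derive.
  auto_derive. auto. Rfield.
Qed.
Lemma L_plus (f g : R -> R) (a b : R) : is_lim f p_infty a -> is_lim g p_infty b ->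
  is_lim (fun y => f y + g y) p_infty (a + b).
Proof. intros H1 H2. eapply is_lim_plus; eauto. reflexivity. Qed.

Lemma L_mult (f g : R -> R) (a b : R) : is_lim f p_infty a -> is_lim g p_infty b ->
  is_lim (fun y => f y * g y) p_infty (a * b).
Proof. intros H1 H2. apply (is_lim_mult f g p_infty a b); auto. exact I. Qed.

Lemma L_opp (f : R -> R) (a : R) : is_lim f p_infty a -> is_lim (fun y => - f y) p_infty (- a).
Proof. intros H. apply (is_lim_opp f p_infty a); auto. Qed.

Lemma L_minus (f g : R -> R) (a b : R) : is_lim f p_infty a -> is_lim g p_infty b ->
  is_lim (fun y => f y - g y) p_infty (a - b).
Proof. intros H1 H2. apply L_plus; auto. apply L_opp; auto. Qed.

Lemma L_inv (f : R -> R) (a : R) : is_lim f p_infty a -> a <> 0 -> is_lim (fun y => / f y) p_infty (/ a).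
Proof. intros H1 H2. apply (is_lim_inv f p_infty a); auto. intros E; apply H2; injection E; auto. Qed.

Lemma L_div (f g : R -> R) (a b : R) : is_lim f p_infty a -> is_lim g p_infty b -> b <> 0 ->
  is_lim (fun y => f y / g y) p_infty (a / b).
Proof. intros H1 H2 H3. apply L_mult; auto. apply L_inv; auto. Qed.

Lemma L_const (a : R) : is_lim (fun _ => a) p_infty a.
Proof. apply is_lim_const. Qed.

Lemma L_invid : is_lim (fun y => / y) p_infty 0.
Proof. apply (is_lim_inv (fun y => y) p_infty p_infty); [apply is_lim_id|discriminate]. Qed.

Lemma L_ext (f g : R -> R) (l : Rbar) : (exists M, forall x, M < x -> f x = g x) ->
  is_lim f p_infty l -> is_lim g p_infty l.
Proof. intros H1 H2. apply (is_lim_ext_loc f g p_infty l); auto. Qed.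

Lemma L_squeeze (f g h : R -> R) (l : R) : (exists M, forall x, M < x -> f x <= h x <= g x) ->
  is_lim f p_infty l -> is_lim g p_infty l -> is_lim h p_infty l.
Proof. intros H1 H2 H3. apply (is_lim_le_le_loc f g h p_infty l); auto. Qed.

Lemma L_le (f g : R -> R) (a b : R) : (exists M, forall x, M < x -> f x <= g x) ->
  is_lim f p_infty a -> is_lim g p_infty b -> a <= b.
Proof. intros H1 H2 H3. exact (is_lim_le_loc f g p_infty a b H1 H2 H3). Qed.

Lemma L_eq_f (f : R -> R) (a b : R) : a = b -> is_lim f p_infty a -> is_lim f p_infty b.
Proof. intros ->; auto. Qed.

Lemma gg_le_inv x : 0 < x -> gg x <= / x.
Proof.
  intros Hx. unfold gg.
  assert (E : exp (- x ^ 2 / 2) = / exp (x ^ 2 / 2)).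
  { rewrite <- exp_Ropp. f_equal. field. }
  rewrite E. apply Rinv_le_contravar; auto.
  destruct (Req_dec (x ^ 2 / 2) 0) as [H0|H0].
  - rewrite H0, exp_0. nra.
  - pose proof (exp_ineq1 _ H0). nra.
Qed.

Lemma L_gg : is_lim gg p_infty 0.
Proof.
  apply L_squeeze with (fun _ => 0) (fun y => / y).
  - exists 0. intros x Hx. split. left; apply gg_pos. apply gg_le_inv; auto.
  - apply L_const.
  - apply L_invid.
Qed.

Lemma GG_0 : GG 0 = 0.
Proof. unfold GG. apply (RInt_point (V:=R_CompleteNormedModule)). Qed.

Lemma atan_der t : is_derive atan t (/ (1 + t ^ 2)).
Proof. apply is_derive_Reals, derivable_pt_lim_atan. Qed.

Lemma JJ_0 : JJ 0 = PI / 4.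
Proof.
  unfold JJ. rewrite (RInt_ext _ (fun t => / (1 + t ^ 2))).
  2:{ intros t _. unfold jf. replace (- (0 ^ 2 * (1 + t ^ 2)) / 2) with 0 by field.
      rewrite exp_0. Rfield. nra. }
  rewrite (is_RInt_unique (V:=R_CompleteNormedModule) _ 0 1 (atan 1 - atan 0)).
  - rewrite atan_1, atan_0. Rring.
  - apply (is_RInt_derive (V:=R_CompleteNormedModule) atan).
    + intros; apply atan_der.
    + intros x _. apply exd_cont. auto_derive. nra.
Qed.

Lemma hh_const x : 0 < x -> hh x = PI / 4.
Proof.
  intros Hx. transitivity (hh 0).
  - symmetry. apply (eq_is_derive (V:=R_NormedModule) hh 0 x); auto.
    intros; apply hh_derive.
  - unfold hh. rewrite JJ_0, GG_0. field.
Qed.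

Lemma JJ_bounds x : 0 <= JJ x <= gg x.
Proof.
  unfold JJ. split.
  - apply RInt_ge_0. lra. apply exRI_cont; intros; apply jf_cont.
    intros t _. unfold jf. apply Rlt_le, Rdiv_lt_0_compat. apply exp_pos. nra.
  - replace (gg x) with (RInt (fun _ => gg x) 0 1).
    2:{ rewrite (RInt_const (V:=R_CompleteNormedModule)). unfold scal; simpl; unfold mult; simpl. ring. }
    apply RInt_le. lra. apply exRI_cont; intros; apply jf_cont.
    apply (ex_RInt_const (V:=R_NormedModule)).
    intros t Ht. unfold jf, gg.
    assert (H1 : exp (- (x ^ 2 * (1 + t ^ 2)) / 2) <= exp (- x ^ 2 / 2)).
    { destruct (Req_dec (x*t) 0) as [E|E].
      - right. f_equal. replace (x^2 * (1+t^2)) with (x^2 + (x*t)^2) by ring. rewrite E. field.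
      - left. apply exp_increasing. assert (0 < (x*t)^2) by (rewrite <- Rsqr_pow2; apply Rsqr_pos_lt; exact E). nra. }
    assert (H2 : 0 < exp (- (x ^ 2 * (1 + t ^ 2)) / 2)) by apply exp_pos.
    unfold Rdiv. rewrite <- (Rmult_1_r (exp (- x ^ 2 * / 2))).
    apply Rmult_le_compat; try lra.
    + left; apply Rinv_0_lt_compat; nra.
    + replace 1 with (/ 1) by field. apply Rinv_le_contravar; nra.
Qed.

Lemma L_JJ : is_lim JJ p_infty 0.
Proof.
  apply L_squeeze with (fun _ => 0) gg.
  - exists 0. intros; apply JJ_bounds.
  - apply L_const.
  - apply L_gg.
Qed.

Lemma GG_ge0 x : 0 <= x -> 0 <= GG x.
Proof.
  intros Hx. unfold GG. apply RInt_ge_0; auto. apply ex_RInt_gg. intros; left; apply gg_pos.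
Qed.

Lemma L_GG : is_lim GG p_infty (sqrt (PI / 2)).
Proof.
  assert (H : is_lim (fun x => GG x ^ 2) p_infty (PI / 2)).
  { apply L_ext with (fun x => 2 * (PI / 4 - JJ x)).
    - exists 0. intros x Hx. pose proof (hh_const x Hx). unfold hh in H. lra.
    - apply L_eq_f with (2 * (PI / 4 - 0)). field.
      apply L_mult. apply L_const. apply L_minus. apply L_const. apply L_JJ. }
  apply L_ext with (fun x => sqrt (GG x ^ 2)).
  - exists 0. intros x Hx. rewrite <- Rsqr_pow2. apply sqrt_Rsqr, GG_ge0; lra.
  - apply (filterlim_comp _ _ _ (fun x => GG x ^ 2) sqrt _ _ _ H).
    apply continuous_sqrt.
Qed.
Definition kk := / sqrt (2 * PI).
Definition pdf := std_normal_pdf.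

Lemma pdf_eq t : pdf t = kk * gg t.
Proof. reflexivity. Qed.

Lemma sqrt2PI_pos : 0 < sqrt (2 * PI).
Proof. apply sqrt_lt_R0. pose proof PI_RGT_0. lra. Qed.

Lemma kk_pos : 0 < kk.
Proof. unfold kk. apply Rinv_0_lt_compat, sqrt2PI_pos. Qed.

Lemma kk_le1 : kk <= 1.
Proof.
  unfold kk. rewrite <- Rinv_1. apply Rinv_le_contravar. lra.
  rewrite <- sqrt_1. apply sqrt_le_1_alt. pose proof PI_RGT_0. pose proof PI2_1. lra.
Qed.

Lemma pdf_pos t : 0 < pdf t.
Proof. rewrite pdf_eq. apply Rmult_lt_0_compat. apply kk_pos. apply gg_pos. Qed.

Lemma gg_le1 t : gg t <= 1.
Proof. unfold gg. rewrite <- exp_0. destruct (Req_dec t 0) as [->|H].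
  - right; f_equal; field.
  - left; apply exp_increasing. assert (0 < t ^ 2) by (rewrite <- Rsqr_pow2; apply Rsqr_pos_lt; auto). lra. Qed.

Lemma pdf_le1 t : pdf t <= 1.
Proof. rewrite pdf_eq. pose proof kk_le1. pose proof kk_pos. pose proof (gg_le1 t). pose proof (gg_pos t). nra. Qed.

Lemma gg_even t : gg (- t) = gg t.
Proof. unfold gg. f_equal. field. Qed.

Lemma pdf_even t : pdf (- t) = pdf t.
Proof. rewrite !pdf_eq, gg_even. auto. Qed.

Lemma pdf_cont x : continuous pdf x.
Proof. apply exd_cont. unfold pdf, std_normal_pdf. auto_derive. auto. Qed.

Lemma pdf_der t : is_derive pdf t (- t * pdf t).
Proof. unfold pdf, std_normal_pdf. auto_derive. auto. assert (E : - (t * (t * 1)) * / 2 = - t ^ 2 / 2) by (unfold Rdiv; ring). rewrite E. Rfield. apply Rgt_not_eq, sqrt2PI_pos. Qed.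

Lemma ex_RInt_pdf a b : ex_RInt pdf a b.
Proof. apply exRI_cont; intros; apply pdf_cont. Qed.

Definition F0 x := RInt pdf 0 x.

Lemma F0_eq x : F0 x = kk * GG x.
Proof. unfold F0, GG. rewrite <- RInt_scalR. 2: apply ex_RInt_gg. apply RInt_ext; intros; reflexivity. Qed.

Lemma sqrt_PI2 : kk * sqrt (PI / 2) = / 2.
Proof.
  unfold kk. replace (2 * PI) with ((2 * 2) * (PI / 2)) by field.
  pose proof PI_RGT_0.
  rewrite sqrt_mult by lra. rewrite sqrt_square by lra.
  assert (0 < sqrt (PI / 2)) by (apply sqrt_lt_R0; lra).
  field. lra.
Qed.

Lemma L_F0 : is_lim F0 p_infty (/ 2).
Proof.
  apply L_ext with (fun x => kk * GG x). exists 0; intros; rewrite F0_eq; auto.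
  rewrite <- sqrt_PI2. apply L_mult. apply L_const. apply L_GG.
Qed.

Lemma F0_der x : is_derive F0 x (pdf x).
Proof.
  apply (is_derive_RInt pdf F0 0).
  - apply filter_forall; intros y. apply RInt_cor, ex_RInt_pdf.
  - apply pdf_cont.
Qed.

Lemma F0_odd x : F0 (- x) = - F0 x.
Proof.
  unfold F0.
  replace (RInt pdf 0 (- x)) with (RInt pdf (-1 * 0 + 0) (-1 * x + 0)) by (f_equal; ring).
  rewrite <- (RInt_comp_linR pdf (-1) 0 0 x).
  - replace (- RInt pdf 0 x) with (-1 * RInt pdf 0 x) by ring.
    rewrite <- (RInt_scalR _ _ _ (-1)).
    + apply RInt_ext. intros t _. replace (-1 * t + 0) with (- t) by ring.
      rewrite pdf_even. Rring.
    + apply ex_RInt_pdf.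
  - apply ex_RInt_pdf.
Qed.

Lemma L_F0_m : is_lim F0 m_infty (- / 2).
Proof.
  apply (is_lim_ext (fun x => - F0 (- x))). { intros y. rewrite F0_odd. ring. }
  apply (is_lim_opp (fun x => F0 (- x)) m_infty (/ 2)).
  apply (is_lim_comp F0 (fun x => - x) m_infty (/ 2) p_infty).
  - apply L_F0.
  - apply (is_lim_opp (fun y => y) m_infty m_infty). apply is_lim_id.
  - exists 0. intros; discriminate.
Qed.

Lemma Phi_eq x : Phi x = / 2 + F0 x.
Proof.
  unfold Phi.
  apply (is_RInt_gen_unique (V:=R_CompleteNormedModule)).
  replace (/ 2 + F0 x) with (F0 x - (- / 2)) by ring.
  apply (is_RInt_gen_ext (V:=R_NormedModule) (Derive F0)).
  - apply filter_forall. intros ab y _. apply is_derive_unique, F0_der.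
  - apply (is_RInt_gen_Derive (Fa := Rbar_locally m_infty) (Fb := at_point x)).
    + apply filter_forall. intros ab y _. eexists; apply F0_der.
    + apply filter_forall. intros ab y _. apply (continuous_ext pdf).
      intros z; symmetry; apply is_derive_unique, F0_der. apply pdf_cont.
    + exact L_F0_m.
    + intros P HP. unfold filtermap, at_point. apply locally_singleton; auto.
Qed.

Lemma Phi_der x : is_derive Phi x (pdf x).
Proof.
  apply derR_ext with (fun y => / 2 + F0 y). { intros; rewrite Phi_eq; auto. }
  apply derR_eq with (0 + pdf x). Rring.
  apply derR_plus. apply (is_derive_const (K:=R_AbsRing) (V:=R_NormedModule)). apply F0_der.
Qed.

Lemma Phi_neg x : Phi (- x) = 1 - Phi x.
Proof. rewrite !Phi_eq, F0_odd. field. Qed.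

Lemma L_Phi : is_lim Phi p_infty 1.
Proof.
  apply L_ext with (fun x => / 2 + F0 x). exists 0; intros; rewrite Phi_eq; auto.
  apply L_eq_f with (/2 + /2). field. apply L_plus. apply L_const. apply L_F0.
Qed.

Lemma Phi_diff a b : Phi b - Phi a = RInt pdf a b.
Proof.
  rewrite !Phi_eq. unfold F0.
  rewrite <- (RInt_Chasles (V:=R_CompleteNormedModule) pdf 0 a b).
  - unfold plus; simpl. ring.
  - apply ex_RInt_pdf.
  - apply ex_RInt_pdf.
Qed.

Lemma Phi_lt a b : a < b -> Phi a < Phi b.
Proof.
  intros H. cut (0 < Phi b - Phi a). lra. rewrite Phi_diff.
  apply RInt_gt_0; auto. intros; apply pdf_pos. intros; apply pdf_cont.
Qed.
Lemma derR_mult (f g : R -> R) x df dg : is_derive f x df -> is_derive g x dg ->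
  is_derive (fun y => f y * g y) x (df * g x + f x * dg).
Proof. intros H1 H2. apply (is_derive_mult (K:=R_AbsRing) f g); auto. intros; apply Rmult_comm. Qed.

Lemma RInt_FTC (f df : R -> R) a b :
  (forall x, Rmin a b <= x <= Rmax a b -> is_derive f x (df x)) ->
  (forall x, Rmin a b <= x <= Rmax a b -> continuous df x) -> RInt df a b = f b - f a.
Proof.
  intros H1 H2. apply (is_RInt_unique (V:=R_CompleteNormedModule)).
  apply (is_RInt_derive (V:=R_CompleteNormedModule) f df); auto.
Qed.

Definition Q x := 1 - Phi x.

Lemma Q_eq x : Q x = / 2 - F0 x.
Proof. unfold Q; rewrite Phi_eq; field. Qed.

Lemma L_pdf_lin (a b : R) : is_lim (fun s => pdf (a * s + b) / s) p_infty 0.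
Proof.
  apply L_squeeze with (fun _ => 0) (fun s => / s).
  - exists 0. intros s Hs. pose proof (pdf_pos (a*s+b)). pose proof (pdf_le1 (a*s+b)).
    split. apply Rlt_le, Rdiv_lt_0_compat; auto.
    unfold Rdiv. rewrite <- (Rmult_1_l (/ s)) at 2. apply Rmult_le_compat_r; auto.
    left; apply Rinv_0_lt_compat; auto.
  - apply L_const.
  - apply L_invid.
Qed.

Lemma F0_diff y b : RInt pdf y b = F0 b - F0 y.
Proof. rewrite <- Phi_diff, !Phi_eq. Rring. Qed.

Lemma ex_RInt_cont (f : R -> R) a b : (forall x, continuous f x) -> ex_RInt f a b.
Proof. intros H; apply exRI_cont; intros; apply H. Qed.

Lemma mills_upper y : 0 < y -> y * Q y <= pdf y.
Proof.
  intros Hy.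
  assert (H : / 2 - F0 y <= pdf y / y).
  { apply L_le with (fun b => F0 b - F0 y) (fun _ => pdf y / y).
    - exists y. intros b Hb. rewrite <- F0_diff.
      apply Rle_trans with (RInt (fun t => t * pdf t / y) y b).
      + apply RInt_le. lra. apply ex_RInt_pdf.
        apply ex_RInt_cont. intros x. apply exd_cont. unfold pdf, std_normal_pdf. auto_derive. nra.
        intros t Ht. pose proof (pdf_pos t).
        assert (E : t * pdf t / y = pdf t + pdf t * (t - y) / y) by (Rfield; lra). rewrite E.
        assert (0 <= pdf t * (t - y) / y). { unfold Rdiv; apply Rmult_le_pos; [nra | left; apply Rinv_0_lt_compat; lra]. }
        lra.
      + rewrite (RInt_FTC (fun t => - pdf t / y)).
        * pose proof (pdf_pos b). apply Rle_trans with (pdf y / y + (- pdf b / y)). right; Rfield; lra.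
          assert (0 < pdf b / y) by (apply Rdiv_lt_0_compat; lra). lra.
        * intros x _. apply derR_eq with ((- / y) * (- x * pdf x)). Rfield; lra.
          apply (derR_comp (fun z => - z / y) pdf). auto_derive. auto. Rfield; lra. apply pdf_der.
        * intros x _. apply exd_cont. unfold pdf, std_normal_pdf. auto_derive. nra.
    - apply L_minus. apply L_F0. apply L_const.
    - apply L_const. }
  rewrite Q_eq. apply Rmult_le_reg_r with (/ y). apply Rinv_0_lt_compat; lra.
  replace (y * (/ 2 - F0 y) * / y) with (/ 2 - F0 y) by (Rfield; lra). exact H.
Qed.

Lemma mills_lower y : 0 < y -> y * pdf y <= (1 + y ^ 2) * Q y.
Proof.
  intros Hy.
  assert (H : pdf y / y - 0 <= (1 + / y ^ 2) * (/ 2 - F0 y)).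
  { apply L_le with (fun b => pdf y / y - pdf (1 * b + 0) / b) (fun b => (1 + / y ^ 2) * (F0 b - F0 y)).
    - exists y. intros b Hb. rewrite <- F0_diff. replace (1 * b + 0) with b by ring.
      rewrite <- RInt_scalR. 2: apply ex_RInt_pdf.
      apply Rle_trans with (RInt (fun t => pdf t * (1 + / t ^ 2)) y b).
      + rewrite (RInt_FTC (fun t => - pdf t / t)).
        * right; Rfield; lra.
        * intros x Hx. rewrite Rmin_left in Hx by lra. rewrite Rmax_right in Hx by lra.
          apply derR_eq with ((- (- x * pdf x)) * / x + (- pdf x) * (- / x ^ 2)).
          Rfield; lra.
          apply (derR_mult (fun z => - pdf z) (fun z => / z)).
          apply derR_eq with (-1 * (- x * pdf x)). Rring.
          apply (derR_comp (fun z => - z) pdf). auto_derive; auto. apply pdf_der.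
          auto_derive. lra. Rfield. lra.
        * intros x Hx. rewrite Rmin_left in Hx by lra. rewrite Rmax_right in Hx by lra.
          apply exd_cont. unfold pdf, std_normal_pdf. auto_derive. nra.
      + apply RInt_le. lra.
        apply exRI_cont. intros x Hx. rewrite Rmin_left in Hx by lra. rewrite Rmax_right in Hx by lra.
        apply exd_cont. unfold pdf, std_normal_pdf. auto_derive. nra.
        apply ex_RInt_cont. intros x. apply exd_cont. unfold pdf, std_normal_pdf. auto_derive. auto.
        intros t Ht. pose proof (pdf_pos t). rewrite Rmult_comm. apply Rmult_le_compat_r. lra.
        apply Rplus_le_compat_l. apply Rinv_le_contravar. apply pow_lt; lra.
        apply pow_incr; lra.
    - apply L_minus. apply L_const. apply L_pdf_lin.
    - apply L_mult. apply L_const. apply L_minus. apply L_F0. apply L_const. }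
  rewrite Q_eq. apply Rmult_le_reg_r with (/ y ^ 2). apply Rinv_0_lt_compat, pow_lt; lra.
  replace (y * pdf y * / y ^ 2) with (pdf y / y - 0) by (Rfield; lra).
  apply Rle_trans with (1 := H). right. field. lra.
Qed.
Definition rho y := Q y / pdf y.

Lemma eventually_pos (a b : R) : 0 < a -> exists M, forall s, M < s -> 0 < s /\ 0 < a * s + b.
Proof.
  intros Ha. exists (Rabs b / a). intros s Hs.
  assert (0 <= Rabs b / a) by (apply Rmult_le_pos; [apply Rabs_pos | left; apply Rinv_0_lt_compat; lra]).
  split. lra.
  assert (a * (Rabs b / a) = Rabs b) by (Fld).
  assert (a * s > Rabs b). { replace (Rabs b) with (a * (Rabs b / a)) by (Fld). apply Rmult_lt_compat_l; lra. }
  pose proof (Rle_abs (- b)). rewrite Rabs_Ropp in H2. lra.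
Qed.

Lemma L_b_over_s (b : R) : is_lim (fun s => b / s) p_infty 0.
Proof. apply L_eq_f with (b * 0). ring. apply L_mult. apply L_const. apply L_invid. Qed.

Lemma L_rho (a b : R) : 0 < a -> is_lim (fun s => s * rho (a * s + b)) p_infty (/ a).
Proof.
  intros Ha. destruct (eventually_pos a b Ha) as [M HM].
  apply L_squeeze with (fun s => (a + b / s) / ((/ s) ^ 2 + (a + b / s) ^ 2)) (fun s => / (a + b / s)).
  - exists M. intros s Hs. destruct (HM s Hs) as [Hs0 Hy]. set (y := a * s + b) in *.
    pose proof (pdf_pos y). pose proof (mills_upper y Hy). pose proof (mills_lower y Hy).
    unfold rho. split.
    + replace ((a + b / s) / ((/ s) ^ 2 + (a + b / s) ^ 2)) with (s * y / (1 + y ^ 2)).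
      2:{ unfold y in *. Fld. }
      apply Rmult_le_reg_r with ((1 + y ^ 2) * pdf y). nra.
      replace (s * y / (1 + y ^ 2) * ((1 + y ^ 2) * pdf y)) with (s * (y * pdf y)) by (Fld).
      replace (s * (Q y / pdf y) * ((1 + y ^ 2) * pdf y)) with (s * ((1 + y ^ 2) * Q y)) by (Fld).
      apply Rmult_le_compat_l; lra.
    + replace (/ (a + b / s)) with (s / y). 2:{ unfold y in *. Fld. }
      apply Rmult_le_reg_r with (y * pdf y). nra.
      replace (s / y * (y * pdf y)) with (s * pdf y) by (Fld).
      replace (s * (Q y / pdf y) * (y * pdf y)) with (s * (y * Q y)) by (Fld).
      apply Rmult_le_compat_l; lra.
  - apply L_eq_f with ((a + 0) / (0 ^ 2 + (a + 0) ^ 2)). Fld.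
    apply L_div. apply L_plus. apply L_const. apply L_b_over_s.
    apply L_plus. apply (L_mult (fun s => / s) (fun s => / s * 1) 0 (0 * 1)). apply L_invid.
    apply L_mult. apply L_invid. apply L_const.
    apply (L_mult (fun s => a + b / s) (fun s => (a + b / s) * 1) (a + 0) ((a + 0) * 1)).
    apply L_plus. apply L_const. apply L_b_over_s.
    apply L_mult. apply L_plus. apply L_const. apply L_b_over_s. apply L_const.
    nra.
  - apply L_eq_f with (/ (a + 0)). f_equal; ring.
    apply L_inv. apply L_plus. apply L_const. apply L_b_over_s. lra.
Qed.

Lemma quad_minf (d e f0 : R) : 0 < d -> is_lim (fun s => - d * s ^ 2 + e * s + f0) p_infty m_infty.
Proof.
  intros Hd. apply is_lim_spec. intros M.
  set (K := Rabs e + Rabs f0 + Rabs M + 1).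
  exists (K / d + 1). intros s Hs.
  assert (HK : 1 <= K) by (unfold K; pose proof (Rabs_pos e); pose proof (Rabs_pos f0); pose proof (Rabs_pos M); lra).
  assert (H1 : 0 <= K / d) by (apply Rmult_le_pos; [lra | left; apply Rinv_0_lt_compat; lra]).
  assert (H2 : d * s > K). { replace K with (d * (K / d)) by (Fld). apply Rmult_lt_compat_l; lra. }
  assert (H3 : d * s ^ 2 > K * s) by nra.
  pose proof (Rle_abs e). pose proof (Rle_abs f0). pose proof (Rle_abs (- M)). rewrite Rabs_Ropp in H4.
  pose proof (Rle_abs (- e)). rewrite Rabs_Ropp in H5.
  assert (Hs1 : 1 <= s) by lra.
  assert (A1 : e * s <= Rabs e * s) by (apply Rmult_le_compat_r; lra).
  assert (A2 : Rabs f0 <= Rabs f0 * s) by (pose proof (Rabs_pos f0); nra).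
  assert (A3 : Rabs M + 1 <= (Rabs M + 1) * s) by (pose proof (Rabs_pos M); nra).
  unfold K in H3. lra.
Qed.

Lemma L_ratio (a1 b1 a2 b2 : R) : 0 <= a1 < a2 ->
  is_lim (fun s => pdf (a2 * s + b2) / pdf (a1 * s + b1)) p_infty 0.
Proof.
  intros Ha.
  set (d := (a2 ^ 2 - a1 ^ 2) / 2). set (e := (a1 * b1 - a2 * b2)). set (f0 := (b1 ^ 2 - b2 ^ 2) / 2).
  apply (is_lim_ext (fun s => exp (- d * s ^ 2 + e * s + f0))).
  { intros s. rewrite !pdf_eq. unfold gg.
    replace (- (a2 * s + b2) ^ 2 / 2) with ((- d * s ^ 2 + e * s + f0) + - (a1 * s + b1) ^ 2 / 2)
      by (unfold d, e, f0; field).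
    rewrite (exp_plus (- d * s ^ 2 + e * s + f0)). Rfield. split; apply Rgt_not_eq. apply exp_pos. apply kk_pos. }
  apply (is_lim_comp exp (fun s => - d * s ^ 2 + e * s + f0) p_infty 0 m_infty).
  - apply is_lim_exp_m.
  - apply quad_minf. unfold d. nra.
  - exists 0. intros; discriminate.
Qed.
Lemma Q_pos y : 0 < Q y.
Proof.
  destruct (Rlt_dec 0 y) as [H|H].
  - pose proof (mills_lower y H). pose proof (pdf_pos y).
    assert (0 < y * pdf y) by nra. pose proof (pow2_ge_0 y). nra.
  - assert (H1 : 0 < Q 1). { pose proof (mills_lower 1 Rlt_0_1). pose proof (pdf_pos 1). nra. }
    unfold Q in *. assert (Phi y < Phi 1) by (apply Phi_lt; lra). lra.
Qed.

Lemma Phi_lt1 x : Phi x < 1.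
Proof. pose proof (Q_pos x). unfold Q in H. lra. Qed.

Lemma Phi_pos x : 0 < Phi x.
Proof. pose proof (Q_pos (- x)). unfold Q in H. rewrite Phi_neg in H. lra. Qed.

Lemma rho_pos y : 0 < rho y.
Proof. unfold rho. apply Rdiv_lt_0_compat. apply Q_pos. apply pdf_pos. Qed.

Lemma Q_rho y : Q y = rho y * pdf y.
Proof. unfold rho. pose proof (pdf_pos y). field. lra. Qed.

Lemma L_Q_lin (a b : R) : 0 < a -> is_lim (fun s => Q (a * s + b)) p_infty 0.
Proof.
  intros Ha. apply L_ext with (fun s => (s * rho (a * s + b)) * (pdf (a * s + b) / s)).
  - exists 0. intros s Hs. rewrite Q_rho. field. lra.
  - apply L_eq_f with (/ a * 0). ring. apply L_mult. apply L_rho; auto. apply L_pdf_lin.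
Qed.

Lemma L_Phi_lin (a b : R) : 0 < a -> is_lim (fun s => Phi (a * s + b)) p_infty 1.
Proof.
  intros Ha. apply L_ext with (fun s => 1 - Q (a * s + b)).
  - exists 0. intros; unfold Q; ring.
  - apply L_eq_f with (1 - 0). ring. apply L_minus. apply L_const. apply L_Q_lin; auto.
Qed.

Definition Pf (c : R) (al : Rbar) (s : R) : R :=
  match al with Finite A => Phi (A * s - c) | p_infty => 1 | m_infty => 0 end.
Definition dPf (c : R) (al : Rbar) (s : R) : R :=
  match al with Finite A => A * pdf (A * s - c) | _ => 0 end.
Definition Fd c aL aU s := Pf c aU s - Pf c aL s.
Definition Kf c aL aU s :=
  (dPf c aU s - dPf c aL s) / (2 * s * (Fd c aL aU s * (1 - Fd c aL aU s))).

Lemma Kf_sym c aL aU s : Kf c aL aU s = Kf (- c) (Rbar_opp aU) (Rbar_opp aL) s.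
Proof.
  assert (HP : forall al, Pf (- c) (Rbar_opp al) s = 1 - Pf c al s).
  { intros [A| |]; simpl; try ring. replace (- A * s - - c) with (- (A * s - c)) by ring.
    apply Phi_neg. }
  assert (HD : forall al, dPf (- c) (Rbar_opp al) s = - dPf c al s).
  { intros [A| |]; simpl; try ring. replace (- A * s - - c) with (- (A * s - c)) by ring.
    rewrite pdf_even. ring. }
  unfold Kf, Fd. rewrite !HP, !HD. f_equal. ring. f_equal. f_equal; ring.
Qed.

Lemma core_in1 c A : 0 < A -> is_lim (Kf c m_infty (Finite A)) p_infty (A ^ 2 / 2).
Proof.
  intros HA. destruct (eventually_pos A (- c) HA) as [M HM].
  apply L_ext with (fun s => A / (2 * Phi (A * s + - c) * (s * rho (A * s + - c)))).
  - exists M. intros s Hs. destruct (HM s Hs) as [Hs0 Hy].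
    unfold Kf, Fd, Pf, dPf. replace (A * s - c) with (A * s + - c) by ring.
    set (y := A * s + - c). pose proof (pdf_pos y). pose proof (rho_pos y). pose proof (Phi_pos y).
    replace (1 - (Phi y - 0)) with (rho y * pdf y) by (rewrite <- Q_rho; unfold Q; ring).
    field. nz.
  - apply L_eq_f with (A / (2 * 1 * / A)). field; lra.
    apply L_div. apply L_const. apply L_mult. apply L_mult. apply L_const.
    apply L_Phi_lin; auto. apply L_rho; auto.
    apply Rgt_not_eq. apply Rmult_lt_0_compat. lra. apply Rinv_0_lt_compat; lra.
Qed.
Lemma ev_max (P1 P2 : R -> Prop) : (exists M, forall s, M < s -> P1 s) -> (exists M, forall s, M < s -> P2 s) ->
  exists M, forall s, M < s -> P1 s /\ P2 s.
Proof.
  intros [M1 H1] [M2 H2]. exists (Rmax M1 M2). intros s Hs. split.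
  apply H1. pose proof (Rmax_l M1 M2). lra. apply H2. pose proof (Rmax_r M1 M2). lra.
Qed.

Lemma Phi_m x : Phi (- x) = Q x.
Proof. rewrite Phi_neg. reflexivity. Qed.

Lemma core_in2a c A B : 0 < A -> A < - B ->
  is_lim (Kf c (Finite B) (Finite A)) p_infty (A ^ 2 / 2).
Proof.
  intros HA HB.
  destruct (ev_max _ _ (eventually_pos A (- c) HA) (eventually_pos (- B) c ltac:(lra))) as [M HM].
  apply L_ext with (fun s => (A + (- B) * (pdf (- B * s + c) / pdf (A * s + - c))) /
     (2 * (Phi (A * s + - c) - Q (- B * s + c)) *
      (s * rho (A * s + - c) + s * rho (- B * s + c) * (pdf (- B * s + c) / pdf (A * s + - c))))).
  - exists M. intros s Hs. destruct (HM s Hs) as [[Hs0 HyU] [_ HyL]].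
    unfold Kf, Fd, Pf, dPf. replace (A * s - c) with (A * s + - c) by ring.
    replace (B * s - c) with (- (- B * s + c)) by ring. rewrite Phi_m, pdf_even.
    set (yU := A * s + - c) in *. set (yL := - B * s + c) in *.
    assert (HF : 0 < Phi yU - Q yL).
    { unfold yL. rewrite <- Phi_m. apply Rlt_Rminus, Phi_lt. unfold yU. nra. }
    pose proof (pdf_pos yU). pose proof (rho_pos yU). pose proof (pdf_pos yL). pose proof (rho_pos yL).
    replace (1 - (Phi yU - Q yL)) with (rho yU * pdf yU + rho yL * pdf yL)
      by (rewrite <- !Q_rho; unfold Q; ring).
    field. nz.
  - apply L_eq_f with ((A + - B * 0) / (2 * (1 - 0) * (/ A + / - B * 0))). field; lra.
    apply L_div.
    + apply L_plus. apply L_const. apply L_mult. apply L_const.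
      apply L_ratio. lra.
    + apply L_mult. apply L_mult. apply L_const. apply L_minus. apply L_Phi_lin; auto.
      apply L_Q_lin; lra.
      apply L_plus. apply L_rho; auto. apply L_mult. apply L_rho; lra. apply L_ratio; lra.
    + apply Rgt_not_eq. replace (2 * (1 - 0) * (/ A + / - B * 0)) with (2 * / A) by ring.
      apply Rmult_lt_0_compat. lra. apply Rinv_0_lt_compat; lra.
Qed.
Lemma L_abs (f : R -> R) (l : R) : is_lim f p_infty l -> is_lim (fun s => Rabs (f s)) p_infty (Rabs l).
Proof. intros H. apply (is_lim_Rabs f p_infty l H). Qed.

Lemma Rmin_abs a b : Rmin a b = (a + b - Rabs (a - b)) / 2.
Proof.
  unfold Rmin. destruct (Rle_dec a b).
  - rewrite Rabs_left1 by lra. field.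
  - rewrite Rabs_right by lra. field.
Qed.

Lemma Rmax_abs a b : Rmax a b = (a + b + Rabs (a - b)) / 2.
Proof.
  unfold Rmax. destruct (Rle_dec a b).
  - rewrite Rabs_left1 by lra. field.
  - rewrite Rabs_right by lra. field.
Qed.

Lemma L_between (f g h : R -> R) (l : R) : is_lim f p_infty l -> is_lim g p_infty l ->
  (exists M, forall s, M < s -> Rmin (f s) (g s) <= h s <= Rmax (f s) (g s)) ->
  is_lim h p_infty l.
Proof.
  intros Hf Hg Hb.
  assert (Hd : is_lim (fun s => Rabs (f s - g s)) p_infty 0).
  { apply L_eq_f with (Rabs (l - l)). rewrite Rminus_diag, Rabs_R0; auto.
    apply L_abs. apply L_minus; auto. }
  apply L_squeeze with (fun s => Rmin (f s) (g s)) (fun s => Rmax (f s) (g s)); auto.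
  - apply L_ext with (fun s => (f s + g s - Rabs (f s - g s)) / 2).
    exists 0; intros; rewrite Rmin_abs; auto.
    apply L_eq_f with ((l + l - 0) / 2). field.
    apply L_div. apply L_minus. apply L_plus; auto. auto. apply L_const. lra.
  - apply L_ext with (fun s => (f s + g s + Rabs (f s - g s)) / 2).
    exists 0; intros; rewrite Rmax_abs; auto.
    apply L_eq_f with ((l + l + 0) / 2). field.
    apply L_div. apply L_plus. apply L_plus; auto. auto. apply L_const. lra.
Qed.

Lemma core_in2b c A : 0 < A ->
  is_lim (Kf c (Finite (- A)) (Finite A)) p_infty (A ^ 2 / 2).
Proof.
  intros HA.
  destruct (eventually_pos A (- c) HA) as [M1 HM1]. destruct (eventually_pos A c HA) as [M2 HM2].
  destruct (ev_max _ _ (ex_intro _ M1 HM1) (ex_intro _ M2 HM2)) as [M HM].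
  set (w := fun s => (s * rho (A * s + - c) + s * rho (A * s + c) * (pdf (A * s + c) / pdf (A * s + - c)))
                      / (1 + pdf (A * s + c) / pdf (A * s + - c))).
  apply L_ext with (fun s => A / (2 * (Phi (A * s + - c) - Q (A * s + c)) * w s)).
  - exists M. intros s Hs. destruct (HM s Hs) as [[Hs0 HyU] [_ HyL]].
    unfold Kf, Fd, Pf, dPf, w. replace (A * s - c) with (A * s + - c) by ring.
    replace (- A * s - c) with (- (A * s + c)) by ring. rewrite Phi_m, pdf_even.
    set (yU := A * s + - c) in *. set (yL := A * s + c) in *.
    assert (HF : 0 < Phi yU - Q yL).
    { unfold yL. rewrite <- Phi_m. apply Rlt_Rminus, Phi_lt. unfold yU. nra. }
    pose proof (pdf_pos yU). pose proof (rho_pos yU). pose proof (pdf_pos yL). pose proof (rho_pos yL).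
    replace (1 - (Phi yU - Q yL)) with (rho yU * pdf yU + rho yL * pdf yL)
      by (rewrite <- !Q_rho; unfold Q; ring).
    assert (0 < pdf yL / pdf yU) by (apply Rdiv_lt_0_compat; lra).
    field. nz.
  - apply L_eq_f with (A / (2 * (1 - 0) * / A)). field; lra.
    apply L_div. apply L_const. apply L_mult. apply L_mult. apply L_const. apply L_minus.
    apply L_Phi_lin; auto. apply L_Q_lin; auto.
    + apply L_between with (fun s => s * rho (A * s + - c)) (fun s => s * rho (A * s + c)).
      apply L_rho; auto. apply L_rho; auto.
      exists M. intros s Hs. destruct (HM s Hs) as [[Hs0 HyU] [_ HyL]]. unfold w.
      set (a := s * rho (A * s + - c)). set (b := s * rho (A * s + c)).
      set (t := pdf (A * s + c) / pdf (A * s + - c)).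
      assert (Ht : 0 < t) by (apply Rdiv_lt_0_compat; apply pdf_pos).
      pose proof (Rmin_l a b). pose proof (Rmin_r a b). pose proof (Rmax_l a b). pose proof (Rmax_r a b).
      split.
      * apply Rmult_le_reg_r with (1 + t). lra.
        replace ((a + b * t) / (1 + t) * (1 + t)) with (a + b * t) by (field; lra). nra.
      * apply Rmult_le_reg_r with (1 + t). lra.
        replace ((a + b * t) / (1 + t) * (1 + t)) with (a + b * t) by (field; lra). nra.
    + apply Rgt_not_eq. replace (2 * (1 - 0) * / A) with (2 * / A) by ring.
      apply Rmult_lt_0_compat. lra. apply Rinv_0_lt_compat; lra.
Qed.

Lemma core_in2 c A B : 0 < A -> A <= - B ->
  is_lim (Kf c (Finite B) (Finite A)) p_infty (A ^ 2 / 2).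
Proof.
  intros HA [H|H]. apply core_in2a; auto.
  replace B with (- A) by lra. apply core_in2b; auto.
Qed.
Lemma core_out1 c B : 0 < B -> is_lim (Kf c (Finite B) p_infty) p_infty (- (B ^ 2 / 2)).
Proof.
  intros HB. destruct (eventually_pos B (- c) HB) as [M HM].
  apply L_ext with (fun s => - B / (2 * (s * rho (B * s + - c)) * Phi (B * s + - c))).
  - exists M. intros s Hs. destruct (HM s Hs) as [Hs0 Hy].
    unfold Kf, Fd, Pf, dPf. replace (B * s - c) with (B * s + - c) by ring.
    set (y := B * s + - c). pose proof (pdf_pos y). pose proof (rho_pos y). pose proof (Phi_pos y).
    replace (1 - Phi y) with (rho y * pdf y) by (rewrite <- Q_rho; unfold Q; ring).
    replace (1 - rho y * pdf y) with (Phi y) by (rewrite <- Q_rho; unfold Q; ring).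
    field. nz.
  - apply L_eq_f with (- B / (2 * / B * 1)). field; lra.
    apply L_div. apply L_const. apply L_mult. apply L_mult. apply L_const.
    apply L_rho; auto. apply L_Phi_lin; auto.
    apply Rgt_not_eq. replace (2 * / B * 1) with (2 * / B) by ring.
    apply Rmult_lt_0_compat. lra. apply Rinv_0_lt_compat; lra.
Qed.

Lemma core_out2 c A B : 0 < B -> B < A ->
  is_lim (Kf c (Finite B) (Finite A)) p_infty (- (B ^ 2 / 2)).
Proof.
  intros HB HAB.
  destruct (ev_max _ _ (eventually_pos A (- c) ltac:(lra)) (eventually_pos B (- c) HB)) as [M HM].
  apply L_ext with (fun s => (A * (pdf (A * s + - c) / pdf (B * s + - c)) - B) /
     (2 * (s * rho (B * s + - c) - s * rho (A * s + - c) * (pdf (A * s + - c) / pdf (B * s + - c))) *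
      (1 - (Q (B * s + - c) - Q (A * s + - c))))).
  - exists M. intros s Hs. destruct (HM s Hs) as [[Hs0 HyU] [_ HyL]].
    unfold Kf, Fd, Pf, dPf. replace (A * s - c) with (A * s + - c) by ring.
    replace (B * s - c) with (B * s + - c) by ring.
    set (yU := A * s + - c) in *. set (yL := B * s + - c) in *.
    pose proof (pdf_pos yU). pose proof (pdf_pos yL).
    assert (HF : 0 < Phi yU - Phi yL) by (apply Rlt_Rminus, Phi_lt; unfold yU, yL; nra).
    assert (HF2 : 0 < 1 - (Phi yU - Phi yL)) by (pose proof (Phi_pos yL); pose proof (Phi_lt1 yU); lra).
    assert (E : s * rho yL - s * rho yU * (pdf yU / pdf yL) = s * (Phi yU - Phi yL) / pdf yL).
    { unfold rho, Q. field. nz. }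
    rewrite E. replace (Q yL - Q yU) with (Phi yU - Phi yL) by (unfold Q; ring).
    field. nz.
  - apply L_eq_f with ((A * 0 - B) / (2 * (/ B - / A * 0) * (1 - (0 - 0)))). field; lra.
    apply L_div.
    + apply L_minus. apply L_mult. apply L_const. apply L_ratio; lra. apply L_const.
    + apply L_mult. apply L_mult. apply L_const. apply L_minus. apply L_rho; auto.
      apply L_mult. apply L_rho; lra. apply L_ratio; lra.
      apply L_minus. apply L_const. apply L_minus. apply L_Q_lin; auto. apply L_Q_lin; lra.
    + apply Rgt_not_eq. replace (2 * (/ B - / A * 0) * (1 - (0 - 0))) with (2 * / B) by ring.
      apply Rmult_lt_0_compat. lra. apply Rinv_0_lt_compat; lra.
Qed.

Lemma core_out3 c : is_lim (Kf c (Finite 0) p_infty) p_infty 0.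
Proof.
  apply L_ext with (fun _ => 0). exists 0. intros s _. unfold Kf, dPf. unfold Rdiv. ring.
  apply L_const.
Qed.

Lemma core_out4 c A : 0 < A -> is_lim (Kf c (Finite 0) (Finite A)) p_infty 0.
Proof.
  intros HA. destruct (eventually_pos A (- c) HA) as [M HM].
  set (q := Phi (- c)).
  apply L_ext with (fun s => (A / 2) * (pdf (A * s + - c) / s) /
      ((Phi (A * s + - c) - q) * (1 - (Phi (A * s + - c) - q)))).
  - exists M. intros s Hs. destruct (HM s Hs) as [Hs0 Hy].
    unfold Kf, Fd, Pf, dPf. replace (A * s - c) with (A * s + - c) by ring.
    replace (0 * s - c) with (- c) by ring. fold q.
    set (y := A * s + - c) in *. pose proof (pdf_pos y).
    assert (HF : 0 < Phi y - q) by (apply Rlt_Rminus, Phi_lt; unfold y; nra).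
    assert (HF2 : 0 < 1 - (Phi y - q)) by (pose proof (Phi_pos (- c)); pose proof (Phi_lt1 y); unfold q in *; lra).
    field. nz.
  - pose proof (Phi_pos (- c)). pose proof (Phi_lt1 (- c)). fold q in H, H0.
    apply L_eq_f with ((A / 2) * 0 / ((1 - q) * (1 - (1 - q)))). field. nz.
    apply L_div. apply L_mult. apply L_const. apply L_pdf_lin.
    apply L_mult. apply L_minus. apply L_Phi_lin; auto. apply L_const.
    apply L_minus. apply L_const. apply L_minus. apply L_Phi_lin; auto. apply L_const.
    nz.
Qed.
Definition sqR (al : Rbar) : Rbar := match al with Finite A => Finite (A ^ 2) | _ => p_infty end.
Definition indR (aL aU : Rbar) : R :=
  match excluded_middle_informative (Rbar_lt aL 0 /\ Rbar_lt 0 aU) with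
  | left _ => 0 | right _ => 1 end.
Definition Tg aL aU := Rbar_mult (Finite (/ 2 - indR aL aU)) (Rbar_min (sqR aU) (sqR aL)).

Lemma indR_in aL aU : Rbar_lt aL 0 -> Rbar_lt 0 aU -> indR aL aU = 0.
Proof. intros H1 H2. unfold indR. destruct excluded_middle_informative as [_|n]; auto. tauto. Qed.

Lemma indR_out aL aU : ~ (Rbar_lt aL 0 /\ Rbar_lt 0 aU) -> indR aL aU = 1.
Proof. intros H. unfold indR. destruct excluded_middle_informative as [a|_]; auto. tauto. Qed.

Lemma L_fin (f : R -> R) (v : R) (T : Rbar) : is_lim f p_infty v -> T = Finite v -> is_lim f p_infty T.
Proof. intros H ->; auto. Qed.

Lemma Kf_ext c aL aU aL' aU' : aL = aL' -> aU = aU' -> Kf c aL aU = Kf c aL' aU'.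
Proof. intros -> ->; auto. Qed.

Lemma L_sym c aL aU (T : Rbar) : is_lim (Kf (- c) (Rbar_opp aU) (Rbar_opp aL)) p_infty T ->
  is_lim (Kf c aL aU) p_infty T.
Proof. intros H. apply (is_lim_ext (Kf (- c) (Rbar_opp aU) (Rbar_opp aL))); auto. intros; symmetry; apply Kf_sym. Qed.

Theorem core c aL aU : Rbar_lt aL aU -> ~ (aL = m_infty /\ aU = p_infty) ->
  is_lim (Kf c aL aU) p_infty (Tg aL aU).
Proof.
  intros Hlt Hnot.
  destruct aL as [B| |]; destruct aU as [A| |]; simpl in Hlt; try contradiction.
  -
    destruct (Rle_dec 0 B) as [HB|HB].
    + apply L_fin with (- (Rmin (A ^ 2) (B ^ 2) / 2)).
      * rewrite Rmin_right by nra. destruct HB as [HB|HB].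
        apply core_out2; lra. subst B.
        apply L_eq_f with 0. field. apply core_out4; lra.
      * unfold Tg. rewrite indR_out. simpl. f_equal. field. simpl. lra.
    + destruct (Rle_dec A 0) as [HA|HA].
      * apply L_fin with (- (Rmin (A ^ 2) (B ^ 2) / 2)).
        -- rewrite Rmin_left by nra. apply L_sym. destruct HA as [HA|HA].
           apply L_eq_f with (- ((- A) ^ 2 / 2)). field. apply (core_out2 (- c) (- B) (- A)); lra.
           subst A. apply L_eq_f with 0. field. 
           replace (Rbar_opp (Finite 0)) with (Finite 0) by (simpl; f_equal; ring).
           apply (core_out4 (- c) (- B)); lra.
        -- unfold Tg. rewrite indR_out. simpl. f_equal. field. simpl. lra.
      * apply L_fin with (Rmin (A ^ 2) (B ^ 2) / 2).
        -- destruct (Rle_dec A (- B)).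
           ++ rewrite Rmin_left by nra. apply core_in2; lra.
           ++ rewrite Rmin_right by nra. apply L_sym.
              apply L_eq_f with ((- B) ^ 2 / 2). field. apply (core_in2 (- c) (- B) (- A)); lra.
        -- unfold Tg. rewrite indR_in. simpl. f_equal. field. simpl; lra. simpl; lra.
  -
    destruct (Rle_dec 0 B) as [HB|HB].
    + apply L_fin with (- (B ^ 2 / 2)).
      * destruct HB as [HB|HB]. apply core_out1; auto. subst B. apply L_eq_f with 0. field. apply core_out3.
      * unfold Tg. rewrite indR_out. simpl. f_equal. field. simpl. lra.
    + apply L_fin with (B ^ 2 / 2).
      * apply L_sym. apply L_eq_f with ((- B) ^ 2 / 2). field. apply (core_in1 (- c) (- B)); lra.
      * unfold Tg. rewrite indR_in. simpl. f_equal. field. simpl; lra. simpl; auto.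
  -
    destruct (Rlt_dec 0 A) as [HA|HA].
    + apply L_fin with (A ^ 2 / 2).
      * apply core_in1; auto.
      * unfold Tg. rewrite indR_in. simpl. f_equal. field. simpl; auto. simpl; lra.
    + apply L_fin with (- (A ^ 2 / 2)).
      * apply L_sym. destruct (Req_dec A 0) as [E|E].
        -- subst A. apply L_eq_f with 0. field.
           replace (Rbar_opp (Finite 0)) with (Finite 0) by (simpl; f_equal; ring). apply core_out3.
        -- apply L_eq_f with (- ((- A) ^ 2 / 2)). field. apply (core_out1 (- c) (- A)); lra.
      * unfold Tg. rewrite indR_out. simpl. f_equal. field. simpl. lra.
  - exfalso; apply Hnot; auto.
Qed.
Lemma Pf_der c al n : 0 < n ->
  is_derive (fun m => Pf c al (sqrt m)) n (dPf c al (sqrt n) * / (2 * sqrt n)).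
Proof.
  intros Hn. assert (Hs : 0 < sqrt n) by (apply sqrt_lt_R0; auto).
  destruct al as [A| |]; simpl.
  - apply derR_eq with (pdf (A * sqrt n - c) * (A * / (2 * sqrt n))). Rring.
    apply (derR_comp Phi (fun m => A * sqrt m - c)). apply Phi_der.
    auto_derive. auto. Rfield. lra.
  - apply derR_eq with 0. Rring. apply (is_derive_const (K:=R_AbsRing) (V:=R_NormedModule)).
  - apply derR_eq with 0. Rring. apply (is_derive_const (K:=R_AbsRing) (V:=R_NormedModule)).
Qed.

Lemma Fd_bounds c aL aU s : Rbar_lt aL aU -> ~ (aL = m_infty /\ aU = p_infty) -> 0 < s ->
  0 < Fd c aL aU s < 1.
Proof.
  intros Hlt Hnot Hs. unfold Fd, Pf.
  destruct aL as [B| |]; destruct aU as [A| |]; simpl in Hlt; try contradiction.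
  - assert (Phi (B * s - c) < Phi (A * s - c)) by (apply Phi_lt; nra).
    pose proof (Phi_pos (B * s - c)). pose proof (Phi_lt1 (A * s - c)). lra.
  - pose proof (Phi_pos (B * s - c)). pose proof (Phi_lt1 (B * s - c)). lra.
  - pose proof (Phi_pos (A * s - c)). pose proof (Phi_lt1 (A * s - c)). lra.
  - exfalso; apply Hnot; auto.
Qed.

Lemma logit_der c aL aU n : Rbar_lt aL aU -> ~ (aL = m_infty /\ aU = p_infty) -> 0 < n ->
  is_derive (fun m => logit (Fd c aL aU (sqrt m))) n (Kf c aL aU (sqrt n)).
Proof.
  intros Hlt Hnot Hn. assert (Hs : 0 < sqrt n) by (apply sqrt_lt_R0; auto).
  destruct (Fd_bounds c aL aU (sqrt n) Hlt Hnot Hs) as [H0 H1].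
  set (F := Fd c aL aU (sqrt n)) in *.
  apply derR_eq with ((/ F + / (1 - F)) * ((dPf c aU (sqrt n) - dPf c aL (sqrt n)) * / (2 * sqrt n))).
  { unfold Kf. fold F. Rfield. nz. }
  apply (derR_comp logit (fun m => Fd c aL aU (sqrt m))).
  - fold F. unfold logit. auto_derive. lra. Rfield. nz.
  - unfold Fd. apply derR_eq with (dPf c aU (sqrt n) * / (2 * sqrt n) - dPf c aL (sqrt n) * / (2 * sqrt n)).
    Rring. apply derR_minus; apply Pf_der; auto.
Qed.

Definition aR (I theta : R) (d : Rbar) : Rbar :=
  match d with Finite x => Finite (a_fin I theta x) | p_infty => p_infty | m_infty => m_infty end.

Lemma p_n_eq I theta u d m : p_n I theta u d m = Pf (Phi_inv u) (aR I theta d) (sqrt m).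
Proof. destruct d; reflexivity. Qed.

Lemma a_fin_lt I theta x y : 0 < I -> (a_fin I theta x < a_fin I theta y <-> x < y).
Proof.
  intros HI. unfold a_fin.
  assert (0 < sqrt (/ I)) by (apply sqrt_lt_R0, Rinv_0_lt_compat; auto).
  split; intros H'.
  - apply Rmult_lt_reg_r with (/ sqrt (/ I)). apply Rinv_0_lt_compat; auto. unfold Rdiv in H'. lra.
  - unfold Rdiv. apply Rmult_lt_compat_r. apply Rinv_0_lt_compat; auto. lra.
Qed.

Lemma a_fin_theta I theta : a_fin I theta theta = 0.
Proof. unfold a_fin. unfold Rdiv. ring. Qed.

Lemma aR_lt I theta x y : 0 < I -> (Rbar_lt (aR I theta x) (aR I theta y) <-> Rbar_lt x y).
Proof.
  intros HI. destruct x; destruct y; simpl; try tauto. apply a_fin_lt; auto.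
Qed.

Theorem theorem1 (dL dU : Rbar) (theta I u : R) :
  Rbar_lt dL dU ->
  ~ (dL = m_infty /\ dU = p_infty) ->
  0 < I ->
  0 < u < 1 ->
  (forall n : R, 0 < n ->
     ex_derive (fun m => logit (p_n I theta u dU m - p_n I theta u dL m)) n) /\
  is_lim
    (fun n => Derive (fun m => logit (p_n I theta u dU m - p_n I theta u dL m)) n)
    p_infty
    (Rbar_mult (Finite (/ 2 - ind_not_in theta dL dU))
               (Rbar_min (a_sq I theta dU) (a_sq I theta dL))).
Proof.
  intros Hlt Hnot HI Hu.
  set (c := Phi_inv u). set (aL := aR I theta dL). set (aU := aR I theta dU).
  assert (Hlt' : Rbar_lt aL aU) by (apply aR_lt; auto).
  assert (Hnot' : ~ (aL = m_infty /\ aU = p_infty)).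
  { unfold aL, aU. intros [E1 E2]. apply Hnot. destruct dL; destruct dU; simpl in *; try discriminate; auto. }
  assert (Hder : forall n, 0 < n ->
    is_derive (fun m => logit (p_n I theta u dU m - p_n I theta u dL m)) n (Kf c aL aU (sqrt n))).
  { intros n Hn. apply derR_ext with (fun m => logit (Fd c aL aU (sqrt m))).
    - intros m. unfold Fd. rewrite !p_n_eq. reflexivity.
    - apply logit_der; auto. }
  split.
  - intros n Hn. eexists. apply Hder; auto.
  - assert (HT : Tg aL aU = Rbar_mult (Finite (/ 2 - ind_not_in theta dL dU))
                                 (Rbar_min (a_sq I theta dU) (a_sq I theta dL))).
    { unfold Tg. f_equal.
      - f_equal. f_equal. unfold indR, ind_not_in.
        assert (E1 : Rbar_lt aL 0 <-> Rbar_lt dL theta).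
        { unfold aL. rewrite <- (a_fin_theta I theta). change (Finite (a_fin I theta theta)) with (aR I theta (Finite theta)).
          apply aR_lt; auto. }
        assert (E2 : Rbar_lt 0 aU <-> Rbar_lt theta dU).
        { unfold aU. rewrite <- (a_fin_theta I theta). change (Finite (a_fin I theta theta)) with (aR I theta (Finite theta)).
          apply aR_lt; auto. }
        destruct excluded_middle_informative as [a|a]; destruct excluded_middle_informative as [b|b]; auto; tauto.
      - unfold aL, aU. destruct dL; destruct dU; reflexivity. }
    rewrite <- HT.
    apply (is_lim_ext_loc (fun n => Kf c aL aU (sqrt n))).
    + exists 0. intros n Hn. symmetry. apply is_derive_unique. apply Hder; auto.
    + apply (is_lim_comp (Kf c aL aU) sqrt p_infty (Tg aL aU) p_infty).
      * apply core; auto.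
      * apply (is_lim_sqrt_p (fun x => x)). apply is_lim_id.
      * exists 0. intros; discriminate.
Qed.
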